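(* There is no $(2,5)$ strategy for the GKS game; equivalently, there is no $(2,5)$ subgraph of $Q_5$. In particular $k(5)\ge 3$.
   Context: The GKS game with parameter $n$ (a positive integer). A strategy pair $(S,T)$ consists of a function $S$ assigning a bit in $\{0,1\}$ to every sequence $\pi_1\pi_2\ldots\pi_i$ of distinct elements of $[n]=\{1,\dots,n\}$ with $1\le i\le n-1$, and a function $T:\{0,1\}^n\to 2^{[n]}$. For a permutation $\pi=\pi_1\ldots\pi_n$ of $[n]$ and a bit $b$, the final array $A_{\rm final}\in\{0,1\}^n$ is defined by $A_{\rm final}[\pi_i]=S(\pi_1\ldots\pi_i)$ for $1\le i\le n-1$ and $A_{\rm final}[\pi_n]=b$. The pair $(S,T)$ is a $(k,n)$ strategy if for every permutation $\pi$ of $[n]$ and every bit $b$ we have $\pi_n\in T(A_{\rm final})$, and moreover $|T(\sigma)|\le k$ for every $\sigma\in\{0,1\}^n$; $k(n)$ is the minimum such $k$. $Q_n$ is the hypercube graph on $\{0,1\}^n$. Divider–Chooser game w.r.t. a subgraph $G$ of $Q_n$: for $n-1$ rounds, the Divider picks a new coordinate $i$ and the Chooser deletes all remaining vertices with $x_i=0$ or all with $x_i=1$; the Chooser wins if the two final vertices form an edge of $G$. A $(k,n)$ subgraph is a subgraph of $Q_n$ of maximum degree at most $k$ for which the Chooser has a winning strategy. (It is known that a $(k,n)$ strategy exists iff a $(k,n)$ subgraph exists.) *)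

(* Defs.v *)
From mathcomp Require Import all_boot fingroup perm.
Set Implicit Arguments. Unset Strict Implicit. Unset Printing Implicit Defensive.

(* Positions/elements of [n] are represented by 'I_n (0-based). *)
Definition vertex (n : nat) := {ffun 'I_n -> bool}.

Definition perm_seq (n : nat) (p : {perm 'I_n}) : seq 'I_n :=
  [seq p i | i <- enum 'I_n].

(* A_final: A[pi_i] = S(pi_1..pi_i) for i <= n-1, A[pi_n] = b. *)
Definition final_array (n : nat) (S : seq 'I_n -> bool) (p : {perm 'I_n})
    (b : bool) : vertex n :=
  [ffun j => let m := index j (perm_seq p) in
             if m.+1 == n then b else S (take m.+1 (perm_seq p))].

(* (S,T) is a (k,n) strategy.  S is a total function on sequences, only
   its values on sequences of distinct elements of length 1..n-1 are used. *)
Definition gks_strategy (k n : nat) (S : seq 'I_n -> bool)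
    (T : vertex n -> {set 'I_n}) : Prop :=
  (forall (p : {perm 'I_n}) (b : bool) (i : 'I_n),
      i.+1 = n -> p i \in T (final_array S p b))
  /\ (forall s : vertex n, #|T s| <= k).

Definition hcube_adj (n : nat) (x y : vertex n) : bool :=
  #|[set i : 'I_n | x i != y i]| == 1.

(* A Chooser strategy: given the history of (coordinate, kept bit) moves
   and the coordinate just picked by the Divider, the bit to keep
   (i.e. the Chooser deletes all remaining vertices with x_i <> that bit). *)
Definition chooser_strategy (n : nat) := seq ('I_n * bool) -> 'I_n -> bool.

Definition play (n : nat) (C : chooser_strategy n) (d : seq 'I_n)
    : seq ('I_n * bool) :=
  foldl (fun h i => rcons h (i, C h i)) [::] d.

Definition remaining (n : nat) (h : seq ('I_n * bool)) : {set vertex n} :=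
  [set x : vertex n | all (fun ic => x ic.1 == ic.2) h].

Definition chooser_wins (n : nat) (G : rel (vertex n)) (C : chooser_strategy n)
    : Prop :=
  forall d : seq 'I_n, uniq d -> size d = n.-1 ->
    forall x y, x \in remaining (play C d) -> y \in remaining (play C d) ->
      x != y -> G x y.

Definition gks_subgraph (k n : nat) (G : rel (vertex n)) : Prop :=
  (forall x y, G x y -> hcube_adj x y)
  /\ (forall x y, G x y = G y x)
  /\ (forall x, #|[set y | G x y]| <= k)
  /\ (exists C : chooser_strategy n, chooser_wins G C).

Arguments gks_strategy k n S T : clear implicits.
Arguments gks_subgraph k n G : clear implicits.

(* Main.v *)
Require Import Defs.
From mathcomp Require Import all_boot fingroup perm.
From Stdlib Require Import NArith Lia.

Definition oval (o : option bool) (b : bool) := if o is Some x then x else b.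
Fixpoint codeN (c : seq (option bool)) (b : bool) : N :=
  match c with [::] => 0%num | o :: c' => ((if oval o b then 1 else 0) + 2 * codeN c' b)%num end.
Definition ecode (c : seq (option bool)) : N := (8 * codeN c false + N.of_nat (index None c))%num.
Definition incv (w : N) : seq N :=
  [seq (if N.testbit w i then 8 * (w - 2 ^ i) + i else 8 * w + i)%num | i <- [:: 0; 1; 2; 3; 4]%num].
Definition touch (b : seq N) : seq N :=
  flatten [seq [:: N.div k 8; N.div k 8 + 2 ^ (N.modulo k 8)]%num | k <- b].
Fixpoint memN (x : N) (s : seq N) : bool := if s is y :: s' then N.eqb x y || memN x s' else false.
Definition tinc (b : seq N) : seq (seq N) :=
  [seq sort N.leb (incv w) | w <- undup (touch b) & (w <? 32)%num].
Fixpoint mcount (ks : seq N) : seq N -> nat :=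
  match ks with
  | [::] => fun _ => 0
  | x :: ks' => fix mc2 (u : seq N) : nat :=
     match u with
     | [::] => 0
     | y :: u' => if N.eqb x y then (mcount ks' u').+1 else if N.ltb x y then mcount ks' u else mc2 u'
     end
  end.
Definition degok (u : seq N) (tb : seq (seq N)) : bool :=
  all (fun ks => mcount ks u <= 2) tb.
Fixpoint umerge (a : seq N) : seq N -> seq N :=
  match a with
  | [::] => fun b => b
  | x :: a' => fix um2 (b : seq N) : seq N :=
     match b with
     | [::] => a
     | y :: b' => if N.ltb x y then x :: umerge a' b
                  else if N.ltb y x then y :: um2 b'
                  else x :: umerge a' b'
     end
  end.
Fixpoint eqlN (a b : seq N) : bool :=
  match a, b with [::], [::] => true | x :: a', y :: b' => N.eqb x y && eqlN a' b' | _, _ => false end.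
Fixpoint lexN (a b : seq N) : bool :=
  match a, b with [::], _ => true | _ :: _, [::] => false
  | x :: a', y :: b' => N.ltb x y || (N.eqb x y && lexN a' b') end.
Fixpoint dedupA (s : seq (seq N)) : seq (seq N) :=
  match s with
  | [::] => [::]
  | x :: s' => if (if s' is y :: _ then eqlN x y else false) then dedupA s' else x :: dedupA s'
  end.
Fixpoint subS (q : seq N) : seq N -> bool :=
  match q with
  | [::] => fun _ => true
  | x :: q' => fix sub2 (p : seq N) : bool :=
     match p with
     | [::] => false
     | y :: p' => if N.eqb x y then subS q' p' else if N.ltb y x then sub2 p' else false
     end
  end.
Definition absorb (L : seq (seq N)) : seq (seq N) :=
  let S := [seq (size x, x) | x <- dedupA (sort lexN L)] in
  [seq p.2 | p <- S & ~~ has (fun q => (q.1 < p.1) && subS q.2 p.2) S].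
Definition comb (acc L : seq (seq N)) : seq (seq N) :=
  flatten [seq (let tb := tinc b in
     flatten [seq (let u := umerge a b in if degok u tb then [:: u] else [::]) | a <- acc]) | b <- L].
Definition stepF (R : seq (option bool) -> seq (seq N)) (c : seq (option bool))
  (acc : seq (seq N)) (i : nat) : seq (seq N) :=
  if nth None c i is None then
    absorb (comb acc (R (set_nth None c i (Some false)) ++ R (set_nth None c i (Some true))))
  else acc.
Fixpoint Md (n : nat) (c : seq (option bool)) : seq (seq N) :=
  match n with
  | 0 => [:: [::]]
  | n'.+1 => match n' with
     | 0 => [:: [:: ecode c]]
     | _ => absorb (foldl (stepF (Md n') c) [:: [::]] (iota 0 5))
     end
  end.

Lemma memNE x s : memN x s = (x \in s).
Proof.
by elim: s => [|y s IH] //=; rewrite in_cons IH.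
Qed.

Lemma eqlN_eq a b : eqlN a b -> a = b.
Proof.
elim: a b => [|x a IH] [|y b] //= /andP[/N.eqb_eq -> /IH ->] //.
Qed.

Lemma dedupA_mem s x : (x \in dedupA s) = (x \in s).
Proof.
elim: s => [|y s IH] //=.
case: s IH => [|z s] IH /=; first by [].
case: ifP => [/eqlN_eq ->|_]; first by rewrite IH !in_cons; case: (x == z).
by rewrite in_cons IH.
Qed.

Lemma subS_sound q p : subS q p -> {subset q <= p}.
Proof.
elim: q p => [|x q IH] p //=.
elim: p => [|y p IHp] //=.
case: ifP => [/N.eqb_eq -> /IH H k|_].
  by rewrite !in_cons => /orP[->//|/H ->]; rewrite orbT.
case: ifP => // _ /IHp H k /H; rewrite in_cons => ->; by rewrite orbT.
Qed.

Definition subG (E : N -> bool) (u : seq N) := forall k, k \in u -> E k.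

Lemma absorb_sound (L : seq (seq N)) x : x \in L ->
  exists2 y, y \in absorb L & {subset y <= x}.
Proof.
rewrite -(mem_sort lexN) -dedupA_mem.
set L' := dedupA _.
set S := [seq (size x0, x0) | x0 <- L'].
have: size x <= size x by [].
move: {2}(size x) => n; elim: n x => [|n IH] x Hs Hx.
  exists x; last by [].
  rewrite /absorb -/L' -/S.
  apply/mapP; exists (size x, x) => //; rewrite mem_filter.
  rewrite (map_f (fun x0 => (size x0, x0)) Hx) andbT.
  apply/hasPn => q _; move: Hs; rewrite leqn0 => /eqP ->; by rewrite ltn0.
case P: (has (fun q => (q.1 < size x) && subS q.2 x) S).
  case/hasP: P => q /mapP[y Hy ->] /= /andP[Hlt Hsub].
  have [z Hz Hzy] := IH y (leq_trans Hlt Hs) Hy.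
  exists z => // k /Hzy; exact: subS_sound.
exists x; last by [].
rewrite /absorb -/L' -/S.
apply/mapP; exists (size x, x) => //; rewrite mem_filter /= P /=.
exact: (map_f (fun x0 => (size x0, x0)) Hx).
Qed.

Lemma ltb_both (y z : N) : N.ltb y z = false -> N.ltb z y = false -> y = z.
Proof. move=> /N.ltb_ge H1 /N.ltb_ge H2; exact: N.le_antisymm. Qed.
Ltac bsolve := repeat match goal with |- context [ ?t ] => match t with | (_ == _) => case: t | (_ \in _) => case: t end end.
Lemma umerge_mem a b x : (x \in umerge a b) = (x \in a) || (x \in b).
Proof.
elim: a b => [|y a IH] b //=.
elim: b => [|z b IHb] /=; first by rewrite in_nil orbF.
case: ifP => [_|H1]. rewrite in_cons IH !in_cons. by bsolve.
case: ifP => [_|H2]. rewrite in_cons IHb !in_cons. by bsolve.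
rewrite (ltb_both _ _ H1 H2) !in_cons IH. by bsolve.
Qed.

Definition bits (n : nat) : seq bool := mkseq (fun i => odd (n %/ 2 ^ i)) 5.
Definition dv (n : nat) : vertex 5 := [ffun i : 'I_5 => odd (n %/ 2 ^ i)].
Definition epn1 (k : N) : nat := N.to_nat (k / 8).
Definition epn2 (k : N) : nat := N.to_nat (k / 8 + 2 ^ (k mod 8)).
Definition ep1 (k : N) : vertex 5 := dv (epn1 k).
Definition ep2 (k : N) : vertex 5 := dv (epn2 k).
Definition pn (n : nat) (k : N) : nat := if bits (epn1 k) == bits n then epn2 k else epn1 k.

Lemma dv_bits n i : dv n i = nth false (bits n) i.
Proof. by rewrite ffunE /bits nth_mkseq. Qed.

Lemma bits_eq n m : bits n = bits m -> dv n = dv m.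
Proof. by move=> E; apply/ffunP => i; rewrite !dv_bits E. Qed.

Arguments bits_eq {n m}.
Definition vb (v : vertex 5) : seq bool := mkseq (fun i => v (inord i)) 5.
Lemma bits_vb n : bits n = vb (dv n).
Proof.
rewrite /bits /vb /mkseq; apply/eq_in_map => i; rewrite mem_iota /= => Hi.
by rewrite ffunE inordK.
Qed.

Lemma mcount_le ks u : mcount ks u <= count (fun k => k \in u) ks.
Proof.
elim: ks u => [|x ks IH] u //=.
elim: u => [|y u IHu] //=.
case: ifP => [/N.eqb_eq ->|_].
  rewrite in_cons eqxx /= add1n ltnS; apply: leq_trans (IH u) _.
  by apply: sub_count => k /=; rewrite in_cons orbC => ->.
case: ifP => _.
  by apply: leq_trans (IH _) _; rewrite leq_addl.
apply: leq_trans IHu _; rewrite leq_add //.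
  by case Hx: (x \in u) => //; rewrite in_cons Hx orbT.
by apply: sub_count => k /=; rewrite in_cons orbC => ->.
Qed.

Lemma brute_deg : all (fun n => all (fun k => (bits (epn1 k) == bits n) || (bits (epn2 k) == bits n)) (sort N.leb (incv (N.of_nat n)))
   && uniq (map (fun k => bits (pn n k)) (sort N.leb (incv (N.of_nat n))))) (iota 0 32).
Proof. by vm_compute. Qed.

Section Deg.
Variable G : rel (vertex 5).
Hypothesis Gsym : forall x y, G x y = G y x.
Hypothesis Gdeg : forall x, #|[set y | G x y]| <= 2.

Lemma deg_sound u b : subG (fun k => G (ep1 k) (ep2 k)) u -> degok u (tinc b).
Proof.
move=> Hu; apply/allP => ks /mapP[w]; rewrite mem_filter => /andP[/N.ltb_lt Hw _] ->.
apply: leq_trans (mcount_le _ _) _.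
have Hn : N.to_nat w < 32 by apply/ltP; lia.
have Ew : w = N.of_nat (N.to_nat w) by rewrite N2Nat.id.
move: Hn; set n := N.to_nat w => Hn.
have /allP /(_ n) := brute_deg; rewrite mem_iota Hn -Ew => /(_ isT) /andP[Hinc Huq].
rewrite -size_filter.
set s := filter _ _.
have Hus : uniq (map (fun k => dv (pn n k)) s).
  have : uniq (map (fun k => bits (pn n k)) s).
    apply: subseq_uniq Huq; apply: map_subseq; exact: filter_subseq.
  rewrite (eq_map (fun k => bits_vb (pn n k))) (map_comp vb (fun k => dv (pn n k))).
  exact: map_uniq.
rewrite -(size_map (fun k => dv (pn n k))).
apply: leq_trans (Gdeg (dv n)); rewrite cardE.
apply: uniq_leq_size => // y /mapP[k]; rewrite mem_filter => /andP[Hku Hk] ->.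
rewrite mem_enum inE /pn.
have HG := Hu k Hku.
move/allP: Hinc => /(_ k Hk) /orP[/eqP E1|/eqP E2].
  by rewrite E1 eqxx -(bits_eq E1).
case: ifP => [/eqP E1|_]; first by rewrite -(bits_eq E1); exact: HG.
by rewrite -(bits_eq E2) Gsym; exact: HG.
Qed.
End Deg.

Fixpoint opts (n : nat) : seq (seq (option bool)) :=
  if n is n'.+1 then [seq o :: s | o <- [:: None; Some false; Some true], s <- opts n'] else [:: [::]].

Lemma opts_mem c : c \in opts (size c).
Proof.
elim: c => [|o c IH] //=.
by case: o => [[]|]; rewrite !mem_cat map_f ?orbT.
Qed.

Definition vbits (c : seq (option bool)) b := [seq oval o b | o <- c].
Definition vtx (c : seq (option bool)) (b : bool) : vertex 5 := [ffun i : 'I_5 => oval (nth None c i) b].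

Lemma brute_edge : all (fun c => (count_mem None c == 1) ==>
   (bits (epn1 (ecode c)) == vbits c false) && (bits (epn2 (ecode c)) == vbits c true)) (opts 5).
Proof. by vm_compute. Qed.

Lemma vtx_dv c b m : size c = 5 -> bits m = vbits c b -> dv m = vtx c b.
Proof.
move=> Hs E; apply/ffunP => i; rewrite dv_bits E ffunE /vbits.
by rewrite (nth_map None) // Hs.
Qed.

Lemma edge_ok c : size c = 5 -> count_mem None c = 1 ->
  ep1 (ecode c) = vtx c false /\ ep2 (ecode c) = vtx c true.
Proof.
move=> Hs Hc; have := opts_mem c; rewrite Hs => Hm.
move/allP: brute_edge => /(_ c Hm); rewrite Hc eqxx /= => /andP[/eqP E1 /eqP E2].
by split; apply: vtx_dv.
Qed.

Lemma count_set_nth (c : seq (option bool)) i b : i < size c -> nth None c i = None ->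
  count_mem None c = (count_mem None (set_nth None c i (Some b))).+1.
Proof.
elim: c i => [|o c IH] [|i] //= Hi.
  by move=> ->.
move=> /(IH i Hi) ->; by rewrite addnS.
Qed.

Arguments edge_ok {c}.
Arguments count_set_nth {c i} b.
Arguments absorb_sound {L x}.
Arguments vtx_dv {c b m}.
Lemma comb_mem acc L a b : a \in acc -> b \in L -> degok (umerge a b) (tinc b) ->
  umerge a b \in comb acc L.
Proof.
move=> Ha Hb Hd; rewrite /comb.
apply/flattenP; eexists; first exact: (map_f _ Hb).
apply/flattenP; eexists; first exact: (map_f _ Ha).
by rewrite /= Hd inE.
Qed.

Section Sound.
Variable G : rel (vertex 5).
Hypothesis Gsym : forall x y, G x y = G y x.
Hypothesis Gdeg : forall x, #|[set y | G x y]| <= 2.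

Fixpoint Wd (n : nat) (c : seq (option bool)) : Prop :=
  match n with
  | 0 => True
  | n'.+1 => match n' with
     | 0 => G (vtx c false) (vtx c true)
     | _ => forall i : 'I_5, nth None c i = None -> exists b, Wd n' (set_nth None c i (Some b))
     end
  end.

Let E := fun k => G (ep1 k) (ep2 k).

Lemma Md_sound n : forall c, size c = 5 -> count_mem None c = n -> Wd n c ->
  exists2 m, m \in Md n c & subG E m.
Proof.
elim: n => [|n IH] c Hs Hc.
  by move=> _; exists [::] => //; rewrite inE.
case: n IH Hc => [|n] IH Hc /= HW.
  have [E1 E2] := edge_ok Hs Hc.
  exists [:: ecode c]; first by rewrite inE.
  by move=> k; rewrite inE => /eqP ->; rewrite /E E1 E2.
have Hstep : forall acc i, i < 5 -> (exists2 m, m \in acc & subG E m) ->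
    exists2 m, m \in stepF (Md n.+1) c acc i & subG E m.
  move=> acc i Hi [m Hm HmG]; rewrite /stepF.
  case Hn: (nth None c i) => [x|]; first by exists m.
  have [b Hb] := HW (Ordinal Hi) Hn.
  set c' := set_nth None c i (Some b).
  have Hs' : size c' = 5 by rewrite size_set_nth Hs; apply/maxn_idPr.
  have Hc' : count_mem None c' = n.+1.
    by move: Hc; rewrite (count_set_nth b _ Hn) ?Hs // => -[].
  have [m' Hm' Hm'G] := IH c' Hs' Hc' Hb.
  have HL : m' \in Md n.+1 (set_nth None c i (Some false)) ++ Md n.+1 (set_nth None c i (Some true)).
    rewrite mem_cat; apply/orP; move: Hm'; rewrite /c'; case: (b) => H; [right | left]; exact: H.
  have Hd : degok (umerge m m') (tinc m').
    apply: deg_sound => // k; rewrite umerge_mem => /orP[/HmG|/Hm'G] //.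
  have Hu := comb_mem _ _ _ _ Hm HL Hd.
  have [y Hy Hyu] := absorb_sound Hu.
  exists y => // k /Hyu; rewrite umerge_mem => /orP[/HmG|/Hm'G] //.
have : exists2 m, m \in foldl (stepF (Md n.+1) c) [:: [::]] (iota 0 5) & subG E m.
  have : all (fun i => i < 5) (iota 0 5) by [].
  have : exists2 m, m \in [:: [::]] & subG E m by exists [::] => //; rewrite inE.
  elim: (iota 0 5) [:: [::]] => [|i s IHs] acc Hacc //= /andP[Hi Hall].
  exact: IHs (Hstep _ _ Hi Hacc) Hall.
case=> m /absorb_sound [y Hy Hym] HmG.
exists y => // k /Hym; exact: HmG.
Qed.
End Sound.

Set Implicit Arguments. Unset Strict Implicit.

Lemma Md5 : Md 5 (nseq 5 None) = [::].
Proof. vm_cast_no_check (erefl (@nil (seq N))). Qed.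

Fixpoint look (h : seq ('I_5 * bool)) (i : nat) : option bool :=
  match h with [::] => None | ic :: h' => if val ic.1 == i then Some ic.2 else look h' i end.
Definition desc (h : seq ('I_5 * bool)) : seq (option bool) := mkseq (look h) 5.

Lemma look_rcons h (j : 'I_5) b i : look (rcons h (j, b)) i =
  if look h i is Some x then Some x else if val j == i then Some b else None.
Proof. elim: h => [|ic h IH] //=; case: ifP => //. Qed.

Lemma look_notin h (i : 'I_5) : i \notin map fst h -> look h i = None.
Proof.
elim: h => [|ic h IH] //=; rewrite in_cons negb_or => /andP[H1 H2].
by rewrite IH // (inj_eq val_inj) eq_sym (negbTE H1).
Qed.

Lemma look_in h (i : 'I_5) : look h i = None -> i \notin map fst h.
Proof.
elim: h => [|ic h IH] //=; case: ifP => // H /IH H2.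
by rewrite in_cons negb_or H2 andbT -(inj_eq val_inj) eq_sym H.
Qed.

Lemma look_some h ic : uniq (map fst h) -> ic \in h -> look h ic.1 = Some ic.2.
Proof.
elim: h => [|ic' h IH] //= /andP[Hn Hu]; rewrite in_cons => /orP[/eqP ->|Hin].
  by rewrite eqxx.
case: ifP => [/eqP E|_]; last exact: IH.
have : ic.1 \in map fst h by exact: map_f.
have E' : ic'.1 = ic.1 by apply: val_inj.
by rewrite -E' (negbTE Hn).
Qed.

Lemma play_fst n (C : chooser_strategy n) d : map fst (play C d) = d.
Proof.
elim/last_ind: d => [|d i IH] //.
by rewrite /play -cats1 foldl_cat -/(play C d) /= map_rcons IH cats1.
Qed.

Lemma play_rcons n (C : chooser_strategy n) d i :
  play C (rcons d i) = rcons (play C d) (i, C (play C d) i).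
Proof. by rewrite /play -cats1 foldl_cat. Qed.

Lemma free_coord (d : seq 'I_5) : size d < 5 -> exists i : 'I_5, i \notin d.
Proof.
move=> Hs; apply/existsP; rewrite -negb_forall; apply/negP => /forallP H.
have : size (enum 'I_5) <= size d.
  apply: uniq_leq_size; first exact: enum_uniq.
  by move=> x _; exact: H.
by rewrite size_enum_ord leqNgt Hs.
Qed.

Lemma vtx_desc h b (i : 'I_5) : vtx (desc h) b i = oval (look h i) b.
Proof. by rewrite ffunE /desc nth_mkseq. Qed.

Lemma in_remaining h b : uniq (map fst h) -> vtx (desc h) b \in remaining h.
Proof.
move=> Hu; rewrite inE; apply/allP => ic Hic.
by rewrite vtx_desc (look_some Hu Hic).
Qed.

Lemma bridge (G : rel (vertex 5)) (C : chooser_strategy 5) : chooser_wins G C ->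
  forall j d, uniq d -> size d + j = 4 -> Wd G j.+1 (desc (play C d)).
Proof.
move=> HC; elim=> [|j IH] d Hu Hs.
  rewrite addn0 in Hs.
  have Hf : uniq (map fst (play C d)) by rewrite play_fst.
  apply: (HC d Hu) => //; try exact: in_remaining.
  have [i Hi] : exists i : 'I_5, i \notin d by apply: free_coord; rewrite Hs.
  have Hl : look (play C d) i = None by apply: look_notin; rewrite play_fst.
  apply/negP => /eqP E.
  by have := congr1 (fun f : vertex 5 => f i) E; rewrite !vtx_desc Hl.
move=> /= i Hn.
have Hl : look (play C d) i = None by move: Hn; rewrite /desc nth_mkseq.
have Hi : i \notin d by rewrite -(play_fst C d); exact: look_in.
exists (C (play C d) i).
have -> : set_nth None (desc (play C d)) i (Some (C (play C d) i)) = desc (play C (rcons d i)).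
  apply: (@eq_from_nth _ None).
    by rewrite size_set_nth /desc !size_mkseq; apply/maxn_idPr.
  rewrite size_set_nth /desc size_mkseq (maxn_idPr (ltn_ord i)) => k Hk.
  rewrite nth_set_nth /= !nth_mkseq // play_rcons look_rcons.
  case: eqP => [->|Hne]; first by rewrite Hl eqxx.
  case: (look _ k) => // ; case: eqP => // E; by case: Hne.
apply: IH; first by rewrite rcons_uniq Hi Hu.
by rewrite size_rcons addSnnS.
Qed.

Lemma core (G : rel (vertex 5)) (C : chooser_strategy 5) :
  (forall x y, G x y = G y x) -> (forall x, #|[set y | G x y]| <= 2) ->
  chooser_wins G C -> False.
Proof.
move=> Gsym Gdeg HC.
have HW := bridge HC (d := [::]) (j := 4) isT erefl.
have E : desc (play C [::]) = nseq 5 None by [].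
rewrite E in HW.
have [m] := @Md_sound G Gsym Gdeg 5 (nseq 5 None) erefl erefl HW.
by rewrite Md5.
Qed.

Set Implicit Arguments. Unset Strict Implicit.

Section Part1.
Variables (k : nat) (S : seq 'I_5 -> bool) (T : vertex 5 -> {set 'I_5}).
Hypothesis HS : gks_strategy k 5 S T.

Definition GT (x y : vertex 5) : bool :=
  [exists i : 'I_5, [&& x i != y i, [forall j, (j != i) ==> (x j == y j)], i \in T x & i \in T y]].
Definition CT : chooser_strategy 5 := fun h i => S (rcons (map fst h) i).

Lemma GT_sym1 x y : GT x y -> GT y x.
Proof.
move=> /existsP[i /and4P[H1 /forallP H2 H3 H4]]; apply/existsP; exists i.
apply/and4P; split => //; first by rewrite eq_sym.
apply/forallP => j; rewrite [y j == _]eq_sym; exact: H2.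
Qed.

Lemma GT_sym x y : GT x y = GT y x.
Proof. by apply/idP/idP; apply: GT_sym1. Qed.

Definition flip (x : vertex 5) (i : 'I_5) : vertex 5 := [ffun j => if j == i then ~~ x j else x j].

Lemma GT_deg x : #|[set y | GT x y]| <= k.
Proof.
apply: leq_trans (proj2 HS x).
apply: leq_trans (leq_imset_card (flip x) (T x)).
apply: subset_leq_card; apply/subsetP => y; rewrite inE => /existsP[i /and4P[H1 /forallP H2 H3 _]].
apply/imsetP; exists i => //; apply/ffunP => j; rewrite ffunE.
case: eqP => [->|/eqP Hj]; first by move: H1; case: (x i); case: (y i).
by apply/esym/eqP; apply: (implyP (H2 j)).
Qed.

Lemma play_entry d j : j < size d -> (nth ord0 d j, S (take j.+1 d)) \in play CT d.
Proof.
elim/last_ind: d j => [|d i IH] j //=.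
rewrite size_rcons ltnS leq_eqVlt => /orP[/eqP ->|Hj]; rewrite play_rcons mem_rcons in_cons.
  by rewrite nth_rcons ltnn eqxx take_oversize ?size_rcons // /CT play_fst eqxx.
by rewrite nth_rcons Hj -cats1 takel_cat // (IH _ Hj) orbT.
Qed.

Lemma CT_wins : chooser_wins GT CT.
Proof.
move=> d Hu Hs x y Hx Hy Hxy.
have {}Hs : size d = 4 by rewrite Hs.
have [m Hm] : exists m : 'I_5, m \notin d by apply: free_coord; rewrite Hs.
have Hall : forall j, j != m -> j \in d.
  move=> j Hj; apply/negPn/negP => Hjd.
  have : size [:: j, m & d] <= size (enum 'I_5).
    apply: uniq_leq_size => //=; first by rewrite inE negb_or Hj Hjd Hm Hu.
    by move=> z _; rewrite mem_enum.
  by rewrite size_enum_ord /= Hs.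
have Hval : forall z, z \in remaining (play CT d) -> forall j, j \in d -> z j = S (take (index j d).+1 d).
  move=> z; rewrite inE => /allP Hz j Hj.
  have Hij : index j d < size d by rewrite index_mem.
  by have := Hz _ (play_entry Hij); rewrite /= nth_index // => /eqP ->.
have Hag : forall j, j != m -> x j = y j.
  by move=> j /Hall Hj; rewrite (Hval _ Hx _ Hj) (Hval _ Hy _ Hj).
set s := rcons d m.
have Hsu : uniq s by rewrite rcons_uniq Hm Hu.
have Hss : size s = 5 by rewrite size_rcons Hs.
pose f := fun i : 'I_5 => nth ord0 s i.
have f_inj : injective f.
  move=> i1 i2; rewrite /f => E; apply: val_inj => /=.
  by apply/eqP; rewrite -(nth_uniq ord0 _ _ Hsu) ?Hss ?ltn_ord // E.
pose p := perm f_inj.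
have Hp : perm_seq p = s.
  have E1 : perm_seq p = map (nth ord0 s) (map (@nat_of_ord 5) (enum 'I_5)).
    by rewrite /perm_seq -map_comp; apply: eq_map => i; rewrite permE.
  rewrite E1 val_enum_ord.
  by have := mkseq_nth ord0 s; rewrite Hss /mkseq => ->.
have Hfin : forall z, z \in remaining (play CT d) -> final_array S p (z m) = z.
  move=> z Hz; apply/ffunP => j; rewrite ffunE Hp /s -cats1 index_cat.
  case Hj: (j \in d).
    have Hlt : index j d < 4 by rewrite -[X in _ < X]Hs index_mem.
    have -> : ((index j d).+1 == 5) = false by apply/negbTE; rewrite eqSS neq_ltn Hlt.
    by rewrite takel_cat ?Hs // (Hval _ Hz _ Hj).
  have -> : j = m by apply/eqP; apply/negPn/negP => /Hall; rewrite Hj.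
  by rewrite /= eqxx addn0 Hs.
have Hpm : p ord_max = m by rewrite permE /f /s nth_rcons Hs ltnn eqxx.
have HTx : m \in T x by rewrite -Hpm -(Hfin _ Hx); exact: (proj1 HS).
have HTy : m \in T y by rewrite -Hpm -(Hfin _ Hy); exact: (proj1 HS).
apply/existsP; exists m; rewrite HTx HTy !andbT.
apply/andP; split.
  apply: contra Hxy => /eqP E; apply/eqP/ffunP => j.
  by case: (eqVneq j m) => [->|/Hag].
by apply/forallP => j; apply/implyP => /Hag ->.
Qed.
End Part1.

Theorem lemma7 :
  (forall (k : nat) (S : seq 'I_5 -> bool) (T : vertex 5 -> {set 'I_5}),
      gks_strategy k 5 S T -> 3 <= k)
  /\ (forall (k : nat) (G : rel (vertex 5)), gks_subgraph k 5 G -> 3 <= k).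
Proof.
split.
- move=> k S T HS; rewrite leqNgt; apply/negP => Hk.
  apply: (@core (GT T) (CT S)).
  + exact: GT_sym.
  + move=> x; apply: leq_trans (GT_deg HS x) _; exact: Hk.
  + exact: (CT_wins HS).
- move=> k G [_ [Gsym [Gdeg [C HC]]]]; rewrite leqNgt; apply/negP => Hk.
  apply: (@core G C Gsym _ HC) => x.
  apply: leq_trans (Gdeg x) _; exact: Hk.
Qed.
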